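(* Let $R$ be a ring and let $C_\infty$ be the connected component of the point $R(1,0)$ in the distant graph of $\mathbb{P}(R)$. Then the stabilizer of $C_\infty$ in $\mathrm{GL}_2(R)$ (i.e. the set of $G\in\mathrm{GL}_2(R)$ with $C_\infty^G=C_\infty$) equals $\mathrm{GE}_2(R)$.
   Context: $R$ is an associative ring with unit element $1$ (the case $1=0$ is allowed); $R^*$ denotes its group of units and $\mathrm{GL}_2(R)$ the group of invertible $2\times2$ matrices over $R$. A pair $(a,b)\in R^2$ is admissible if it is the first row of some matrix in $\mathrm{GL}_2(R)$. The projective line $\mathbb{P}(R)$ is the set of all cyclic submodules $R(a,b)=\{(ra,rb):r\in R\}$ of the left $R$-module $R^2$ with $(a,b)$ admissible; points are always represented by admissible pairs, and two admissible pairs represent the same point iff one is obtained from the other by left multiplication with a unit. $\mathrm{GL}_2(R)$ acts on $\mathbb{P}(R)$ by $R(a,b)\mapsto R((a,b)G)$. Two points $R(a,b)$, $R(c,d)$ are distant iff $\begin{pmatrix}a&b\\c&d\end{pmatrix}\in\mathrm{GL}_2(R)$. The distant graph has vertex set $\mathbb{P}(R)$ and edges the unordered pairs of distant points; connected components refer to this graph. The elementary matrices are $B_{12}(t)=\begin{pmatrix}1&t\\0&1\end{pmatrix}$ and $B_{21}(t)=\begin{pmatrix}1&0\\t&1\end{pmatrix}$ ($t\in R$); $\mathrm{E}_2(R)$ is the subgroup they generate, and $\mathrm{GE}_2(R)$ is the subgroup of $\mathrm{GL}_2(R)$ generated by $\mathrm{E}_2(R)$ together with all invertible diagonal matrices.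 *)

(* Defs.v *)
(* R is an arbitrary associative ring with 1, possibly 1 = 0
   (hence pzRingType). *)
From HB Require Import structures.
From mathcomp Require Import all_boot all_order all_algebra.
From Stdlib Require Import Relations.
Set Implicit Arguments. Unset Strict Implicit. Unset Printing Implicit Defensive.
Import GRing.Theory.
Local Open Scope ring_scope.

Section ProjLine.
Variable R : pzRingType.

Definition mx2 (a b c d : R) : 'M[R]_2 :=
  \matrix_(i < 2, j < 2)
    if (i == 0 :> nat) then (if (j == 0 :> nat) then a else b)
    else (if (j == 0 :> nat) then c else d).

Definition isUnit (u : R) : Prop := exists v, u * v = 1 /\ v * u = 1.

Definition GL2 (G : 'M[R]_2) : Prop :=
  exists H : 'M[R]_2, G *m H = 1%:M /\ H *m G = 1%:M.

Definition admissible (p : R * R) : Prop :=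
  exists c d, GL2 (mx2 p.1 p.2 c d).

Definition cyc (p : R * R) (x : R * R) : Prop :=
  exists r, x = (r * p.1, r * p.2).

(* two admissible pairs represent the same point iff the submodules agree *)
Definition samepoint (p q : R * R) : Prop := forall x, cyc p x <-> cyc q x.

Definition distant (p q : R * R) : Prop := GL2 (mx2 p.1 p.2 q.1 q.2).

(* one step in the distant graph, taken on representatives (also allowing
   a change of representative of the same point) *)
Definition dstep (p q : R * R) : Prop :=
  distant p q \/ (admissible p /\ admissible q /\ samepoint p q).

Definition Cinf (p : R * R) : Prop :=
  admissible p /\ clos_refl_trans (R * R) dstep (1, 0) p.

Definition act (p : R * R) (G : 'M[R]_2) : R * R :=
  (p.1 * G 0 0 + p.2 * G 1 0, p.1 * G 0 1 + p.2 * G 1 1).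

(* C_inf^G = C_inf as sets of points *)
Definition stabilizes_Cinf (G : 'M[R]_2) : Prop :=
  forall q, admissible q ->
    ((exists p, Cinf p /\ samepoint (act p G) q) <-> Cinf q).

Definition B12 (t : R) : 'M[R]_2 := mx2 1 t 0 1.
Definition B21 (t : R) : 'M[R]_2 := mx2 1 0 t 1.

Inductive GE2 : 'M[R]_2 -> Prop :=
| GE2_B12 t : GE2 (B12 t)
| GE2_B21 t : GE2 (B21 t)
| GE2_diag u v : isUnit u -> isUnit v -> GE2 (mx2 u 0 0 v)
| GE2_mul G H : GE2 G -> GE2 H -> GE2 (G *m H)
| GE2_inv G H : GE2 G -> G *m H = 1%:M -> H *m G = 1%:M -> GE2 H.

End ProjLine.

(* Main.v *)
Require Import Defs.
From HB Require Import structures.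
From mathcomp Require Import all_boot all_order all_algebra.
From Stdlib Require Import Relations.
Set Implicit Arguments. Unset Strict Implicit. Unset Printing Implicit Defensive.
Import GRing.Theory.
Local Open Scope ring_scope.

Section S.
Variable R : pzRingType.
Implicit Types a b c d : R.

Lemma mx2E a b c d (i j : 'I_2) : mx2 a b c d i j =
  if (i == 0 :> nat) then (if (j == 0 :> nat) then a else b)
    else (if (j == 0 :> nat) then c else d).
Proof. rewrite /mx2 mxE //. Qed.

Lemma mulmx2E (G H : 'M[R]_2) i j : (G *m H) i j = G i 0 * H 0 j + G i 1 * H 1 j.
Proof.
rewrite mxE !big_ord_recr big_ord0 /= add0r.
by congr (G i _ * H _ j + G i _ * H _ j); apply: val_inj.
Qed.

Lemma mx2_eta (G : 'M[R]_2) : G = mx2 (G 0 0) (G 0 1) (G 1 0) (G 1 1).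
Proof.
apply/matrixP=> i j; rewrite mx2E.
case: i => [[|[|i]] Hi] //; case: j => [[|[|j]] Hj] //=;
  by congr (G _ _); apply: val_inj.

Qed.

Lemma mx2_mul a b c d a' b' c' d' :
  mx2 a b c d *m mx2 a' b' c' d' =
  mx2 (a*a'+b*c') (a*b'+b*d') (c*a'+d*c') (c*b'+d*d').
Proof.
apply/matrixP=> i j; rewrite mulmx2E !mx2E /=.
by case: i => [[|[|i]] Hi] //; case: j => [[|[|j]] Hj].
Qed.

Lemma mx2_1 : mx2 1 0 0 1 = (1%:M : 'M[R]_2).
Proof.
apply/matrixP=> i j; rewrite mx2E mxE.
by case: i => [[|[|i]] Hi] //; case: j => [[|[|j]] Hj].
Qed.

Lemma mx2_inj a b c d a' b' c' d' : mx2 a b c d = mx2 a' b' c' d' ->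
  [/\ a = a', b = b', c = c' & d = d'].
Proof.
move=> E; have F i j := congr1 (fun M : 'M[R]_2 => M i j) E.
move: (F 0 0) (F 0 1) (F 1 0) (F 1 1); rewrite !mx2E /=.
by move=> -> -> -> ->.
Qed.

Lemma act_mul p (G H : 'M[R]_2) : act (act p G) H = act p (G *m H).
Proof.
rewrite /act !mulmx2E /=; congr (_, _);
rewrite !mulrDl !mulrDr !mulrA addrACA //.
Qed.


Lemma GL2_1 : GL2 (1%:M : 'M[R]_2).
Proof. by exists 1%:M; rewrite mulmx1. Qed.

Lemma GL2_mul (G H : 'M[R]_2) : GL2 G -> GL2 H -> GL2 (G *m H).
Proof.
move=> [G' [G1 G2]] [H' [H1 H2]]; exists (H' *m G'); split.
  by rewrite mulmxA -(mulmxA G) H1 mulmx1.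
by rewrite mulmxA -(mulmxA H') G2 mulmx1.
Qed.

Lemma inv_uniq (G H K : 'M[R]_2) : G *m H = 1%:M -> K *m G = 1%:M -> K = H.
Proof. by move=> GH KG; rewrite -[K]mulmx1 -GH mulmxA KG mul1mx. Qed.

Lemma mx2_act p q (G : 'M[R]_2) :
  mx2 p.1 p.2 q.1 q.2 *m G = mx2 (act p G).1 (act p G).2 (act q G).1 (act q G).2.
Proof. by rewrite {1}(mx2_eta G) mx2_mul. Qed.

Lemma act_1 p : act p (1%:M : 'M[R]_2) = p.
Proof.
case: p => a b; rewrite /act !mxE /=.
by rewrite !mulr1 !mulr0 addr0 add0r.
Qed.

Lemma act10 (E : 'M[R]_2) : act (1, 0) E = (E 0 0, E 0 1).
Proof. by rewrite /act /= !mul1r !mul0r !addr0. Qed.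

Lemma act_scale r p (G : 'M[R]_2) :
  act (r * p.1, r * p.2) G = (r * (act p G).1, r * (act p G).2).
Proof. by rewrite /act /= !mulrDr !mulrA. Qed.

Lemma admissible_act p (G : 'M[R]_2) : GL2 G -> admissible p -> admissible (act p G).
Proof.
move=> HG [c [d Hp]]; exists (act (c, d) G).1, (act (c, d) G).2.
by rewrite -[act p G]/(_, _) -mx2_act; apply: GL2_mul.
Qed.

Lemma distant_act p q (G : 'M[R]_2) : GL2 G -> distant p q -> distant (act p G) (act q G).
Proof. by move=> HG Hpq; rewrite /distant -mx2_act; apply: GL2_mul. Qed.

Lemma cyc_act p x (G : 'M[R]_2) : cyc (act p G) x <-> exists y, cyc p y /\ x = act y G.
Proof.
split.
  case=> r ->; exists (r * p.1, r * p.2); split; first by exists r.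
  by rewrite act_scale.
by case=> y [[r ->] ->]; exists r; rewrite act_scale.
Qed.

Lemma samepoint_act p q (G : 'M[R]_2) : samepoint p q -> samepoint (act p G) (act q G).
Proof.
move=> H x; split => /cyc_act [y [Hy ->]]; apply/cyc_act; exists y; split => //;
  by apply/H.
Qed.

Lemma distant_adm (p q : R * R) : distant p q -> admissible p /\ admissible q.
Proof.
move=> H; split; first by exists q.1, q.2.
exists p.1, p.2.
have -> : mx2 q.1 q.2 p.1 p.2 = mx2 0 1 1 0 *m mx2 p.1 p.2 q.1 q.2.
  by rewrite mx2_mul !mul0r !mul1r !add0r !addr0.
apply: GL2_mul => //; exists (mx2 0 1 1 0).
by rewrite mx2_mul !mul0r !mul1r !add0r !addr0 mx2_1.
Qed.

Lemma dstep_act p q (G : 'M[R]_2) : GL2 G -> dstep p q -> dstep (act p G) (act q G).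
Proof.
move=> HG [D|[Ap [Aq S]]]; [left; exact: distant_act|right].
by split; [|split]; [apply: admissible_act..|apply: samepoint_act].
Qed.

Lemma rt_act (p q : R * R) (G : 'M[R]_2) : GL2 G ->
  clos_refl_trans _ (@dstep R) p q -> clos_refl_trans _ (@dstep R) (act p G) (act q G).
Proof.
move=> HG; elim=> [x y Hxy|x|x y z _ IH1 _ IH2].
- by apply: rt_step; apply: dstep_act.
- exact: rt_refl.
- exact: rt_trans IH1 IH2.
Qed.

Definition preserves (G : 'M[R]_2) := forall p, Cinf p -> Cinf (act p G).

Lemma preservesP (G : 'M[R]_2) : GL2 G -> Cinf (act (1, 0) G) -> preserves G.
Proof.
move=> HG [_ H0] p [Ap Hp]; split; first exact: admissible_act.
apply: rt_trans H0 _; exact: rt_act.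
Qed.

Lemma adm10 : admissible (1 : R, 0 : R).
Proof. by exists 0, 1; rewrite mx2_1; apply: GL2_1. Qed.

Lemma Cinf10 : Cinf (1 : R, 0 : R).
Proof. split; [exact: adm10|exact: rt_refl]. Qed.


Ltac simp := rewrite ?mx2_mul ?mul1r ?mulr1 ?mul0r ?mulr0 ?addr0 ?add0r ?subrr ?addNr ?mulrN ?mulNr ?mx2_1.

Lemma B12_inv (t : R) : B12 t *m B12 (- t) = 1%:M.
Proof. by rewrite /B12; simp. Qed.
Lemma B21_inv (t : R) : B21 t *m B21 (- t) = 1%:M.
Proof. by rewrite /B21; simp. Qed.
Lemma diag_inv (u v u' v' : R) : u * u' = 1 -> v * v' = 1 ->
  mx2 u 0 0 v *m mx2 u' 0 0 v' = 1%:M.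
Proof. by move=> Hu Hv; simp; rewrite Hu Hv; simp. Qed.

Lemma distant_unit01 (u u' : R) : u * u' = 1 -> u' * u = 1 -> distant (0, 1) (u, 0).
Proof.
move=> H1 H2; exists (mx2 0 u' 1 0) => /=; simp; rewrite H1 H2; simp; done.
Qed.

Lemma Cinf_unit (u : R) : isUnit u -> Cinf (u, 0).
Proof.
case=> u' [H1 H2]; have D := distant_unit01 H1 H2.
split; first exact: (proj2 (distant_adm D)).
apply: rt_trans (rt_step _ _ _ _ (or_introl D)).
apply: rt_step; left; rewrite /distant /=; simp; exact: GL2_1.
Qed.

Lemma Cinf_1t (t : R) : Cinf (1, t).
Proof.
have D : distant (0, 1) (1, t).
  by exists (mx2 (- t) 1 1 0) => /=; simp.
split; first exact: (proj2 (distant_adm D)).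
apply: rt_trans (rt_step _ _ _ _ (or_introl D)).
apply: rt_step; left; rewrite /distant /=; simp; exact: GL2_1.
Qed.

Lemma pres_B12 (t : R) : preserves (B12 t).
Proof.
apply: preservesP; first by exists (B12 (- t)); split; [exact: B12_inv|have := B12_inv (- t); rewrite opprK].
by rewrite act10 /B12 !mx2E /=; apply: Cinf_1t.
Qed.

Lemma pres_B21 (t : R) : preserves (B21 t).
Proof.
apply: preservesP; first by exists (B21 (- t)); split; [exact: B21_inv|have := B21_inv (- t); rewrite opprK].
by rewrite act10 /B21 !mx2E /=; apply: Cinf10.
Qed.

Lemma pres_diag (u v : R) : isUnit u -> isUnit v -> preserves (mx2 u 0 0 v).
Proof.
move=> Hu Hv; apply: preservesP.
  case: Hu Hv => [u' [U1 U2]] [v' [V1 V2]].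
  by exists (mx2 u' 0 0 v'); rewrite !diag_inv.
by rewrite act10 !mx2E /=; apply: Cinf_unit.
Qed.


Lemma GE2_GL2 (G : 'M[R]_2) : GE2 G -> GL2 G.
Proof.
elim=> {G} [t|t|u v Hu Hv|G H _ IG _ IH|G H _ _ GH HG].
- by exists (B12 (- t)); split; [exact: B12_inv|have := B12_inv (- t); rewrite opprK].
- by exists (B21 (- t)); split; [exact: B21_inv|have := B21_inv (- t); rewrite opprK].
- case: Hu Hv => [u' [U1 U2]] [v' [V1 V2]].
  by exists (mx2 u' 0 0 v'); rewrite !diag_inv.
- exact: GL2_mul.
- by exists G.
Qed.

Lemma pres_mul (G H : 'M[R]_2) : preserves G -> preserves H -> preserves (G *m H).
Proof. by move=> PG PH p Cp; rewrite -act_mul; apply/PH/PG. Qed.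

Lemma GE2_pres (G : 'M[R]_2) : GE2 G ->
  preserves G /\ forall H, G *m H = 1%:M -> H *m G = 1%:M -> preserves H.
Proof.
elim=> {G} [t|t|u v Hu Hv|G1 G2 GE1 [P1 I1] GE2' [P2 I2]|G H _ [PG IG] GH HG].
- split; first exact: pres_B12.
  by move=> H _ HG; rewrite (inv_uniq (B12_inv t) HG); apply: pres_B12.
- split; first exact: pres_B21.
  by move=> H _ HG; rewrite (inv_uniq (B21_inv t) HG); apply: pres_B21.
- split; first exact: pres_diag.
  case: (Hu) (Hv) => [u' [U1 U2]] [v' [V1 V2]].
  move=> H _ HG; rewrite (inv_uniq (diag_inv U1 V1) HG); apply: pres_diag.
    by exists u.
  by exists v.
- split; first exact: pres_mul.
  case: (GE2_GL2 GE1) => H1 [A1 B1]; case: (GE2_GL2 GE2') => H2 [A2 B2].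
  have E : (G1 *m G2) *m (H2 *m H1) = 1%:M.
    by rewrite mulmxA -(mulmxA G1) A2 mulmx1 A1.
  move=> K _ KG; rewrite (inv_uniq E KG).
  apply: pres_mul.
  + exact: I2.
  + exact: I1.
- split; first exact: IG.
  by move=> K _ KH; rewrite (inv_uniq HG KH).
Qed.


Lemma adm_fix (p : R * R) z : admissible p -> z * p.1 = p.1 -> z * p.2 = p.2 -> z = 1.
Proof.
case=> c [d [H [MH _]]] E1 E2.
have F : p.1 * H 0 0 + p.2 * H 1 0 = 1.
  have := congr1 (fun M : 'M[R]_2 => M 0 0) MH.
  by rewrite mulmx2E !mx2E mxE.
by rewrite -[z]mulr1 -F mulrDr !mulrA E1 E2.
Qed.

Lemma samepoint_unit (p q : R * R) : admissible p -> admissible q -> samepoint p q ->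
  exists u, isUnit u /\ q = (u * p.1, u * p.2).
Proof.
move=> Ap Aq S.
have [r Hr] : cyc q p by apply/S; exists 1; rewrite !mul1r; exact: surjective_pairing.
have [s Hs] : cyc p q by apply/S; exists 1; rewrite !mul1r; exact: surjective_pairing.
exists s; split; last exact: Hs.
move: Ap Aq Hr Hs; clear S; case: p => a b; case: q => c d /= Ap Aq [Ea Eb] [Ec Ed].
exists r; split.
  by apply: (adm_fix Aq); rewrite /= -mulrA -?Ea -?Eb.
by apply: (adm_fix Ap); rewrite /= -mulrA -?Ec -?Ed.
Qed.


Lemma lower_unit (c d : R) : GL2 (mx2 1 0 c d) -> isUnit d.
Proof.
case=> H [MH HM].
have e1 := congr1 (fun M : 'M[R]_2 => M 0 1) MH.
have e2 := congr1 (fun M : 'M[R]_2 => M 1 1) MH.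
have e3 := congr1 (fun M : 'M[R]_2 => M 1 1) HM.
move: e1 e2 e3; rewrite !mulmx2E !mx2E !mxE /= !mul1r !mul0r !mulr0 !addr0.
move=> e1; rewrite e1 mulr0 add0r => e2 e3.
by exists (H 1 1); rewrite add0r in e3.
Qed.

Definition Sp (p : R * R) := exists E, GE2 E /\ p = act (1, 0) E.

Lemma GE2_inv' (E : 'M[R]_2) : GE2 E -> exists E', [/\ GE2 E', E *m E' = 1%:M & E' *m E = 1%:M].
Proof.
move=> GE; case: (GE2_GL2 GE) => E' [A B]; exists E'; split => //.
exact: GE2_inv A B.
Qed.

Lemma Sp_scale (p : R * R) u : isUnit u -> Sp p -> Sp (u * p.1, u * p.2).
Proof.
move=> Hu [E [GE ->]]; exists (mx2 u 0 0 1 *m E); split.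
  apply: GE2_mul => //; apply: GE2_diag => //; by exists 1; rewrite mulr1.
by rewrite -act_mul /act /= !mx2E /= !mul1r !mul0r !addr0 !mul0r !addr0.
Qed.

Lemma Sp_row (c d : R) : isUnit d -> Sp (c, d).
Proof.
case=> d' [D1 D2].
have -> : (c, d) = (d * (1 + (d' * c - 1)), d * 1).
  by rewrite addrC subrK mulrA D1 mul1r mulr1.
apply: (@Sp_scale (1 + (d' * c - 1), 1)); first by exists d'.
exists (B12 1 *m B21 (d' * c - 1)); split; first by apply: GE2_mul; constructor.
by rewrite act10 /B12 /B21 mx2_mul !mx2E /= !mul1r add0r.
Qed.


Lemma Sp_step (p q : R * R) : Sp p -> dstep p q -> Sp q.
Proof.
move=> [E [GE Ep]] [D|[Ap [Aq SP]]].
  have [E' [GE' A B]] := GE2_inv' GE.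
  have Hp : act p E' = (1, 0) by rewrite Ep act_mul A act_1.
  have M : GL2 (mx2 1 0 (act q E').1 (act q E').2).
    by rewrite -[1]/((1, 0) : R * R).1 -[0]/((1, 0) : R * R).2 -{1 2}Hp -mx2_act;
       apply: GL2_mul => //; apply: GE2_GL2.
  have [F [GF EF]] := Sp_row (act q E').1 (lower_unit M).
  exists (F *m E); split; first exact: GE2_mul.
  by rewrite -act_mul -EF -surjective_pairing act_mul B act_1.
have [u [Hu ->]] := samepoint_unit Ap Aq SP.
by apply: Sp_scale => //; exists E.
Qed.

Lemma Cinf_Sp (p : R * R) : Cinf p -> Sp p.
Proof.
case=> _ H0; have := clos_rt_rtn1 _ _ _ _ H0; clear H0; elim => [|y z Hyz _ IH].
  exists 1%:M; split; last by rewrite act_1.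
  by rewrite -mx2_1; apply: (GE2_B12 0).
exact: Sp_step IH Hyz.
Qed.

Lemma stab_GE2 (G : 'M[R]_2) : GL2 G -> stabilizes_Cinf G -> GE2 G.
Proof.
move=> HG St.
have Aq : admissible (act (1, 0) G) by apply: admissible_act => //; exact: adm10.
have Cq : Cinf (act (1, 0) G).
  by apply/(St _ Aq); exists (1, 0); split; [exact: Cinf10|].
have [E [GE Eq]] := Cinf_Sp Cq.
have [E' [GE' A B]] := GE2_inv' GE.
have H10 : act (1, 0) (G *m E') = (1, 0) by rewrite -act_mul Eq act_mul A act_1.
move: H10; rewrite act10 => -[H0 H1].
have Ee : G *m E' = mx2 1 0 ((G *m E') 1 0) ((G *m E') 1 1).
  by rewrite {1}(mx2_eta (G *m E')) H0 H1.
have GL : GL2 (G *m E') by apply: GL2_mul => //; apply: GE2_GL2.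
rewrite Ee in GL; have U := lower_unit GL.
have -> : G = (G *m E') *m E by rewrite -mulmxA B mulmx1.
apply: GE2_mul => //; rewrite Ee.
have -> : mx2 1 0 ((G *m E') 1 0) ((G *m E') 1 1) =
          B21 ((G *m E') 1 0) *m mx2 1 0 0 ((G *m E') 1 1).
  by rewrite /B21 mx2_mul !mul1r !mulr0 !mul0r !addr0 !add0r mulr1.
apply: GE2_mul; first exact: GE2_B21.
by apply: GE2_diag => //; exists 1; rewrite mulr1.
Qed.

Lemma GE2_stab (G : 'M[R]_2) : GE2 G -> stabilizes_Cinf G.
Proof.
move=> GE q Aq; have [PG PI] := GE2_pres GE; split.
  case=> p [Cp SP]; have [Ap Rp] := PG p Cp; split => //.
  apply: rt_trans Rp (rt_step _ _ _ _ _); right; split => //.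
have [H [A B]] := GE2_GL2 GE => Cq.
exists (act q H); split; first exact: PI.
by rewrite act_mul B act_1.
Qed.

End S.

Theorem mainTheorem3 (R : pzRingType) (G : 'M[R]_2) :
  (GL2 G /\ stabilizes_Cinf G) <-> GE2 G.
Proof.
split; first by case; apply: stab_GE2.
by move=> GE; split; [apply: GE2_GL2|apply: GE2_stab].
Qed.
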